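(* Let $Q=\sum_{i\in I}E_{i,\sigma(i)}\in N_n$ be a subpermutation and let $A=[a_{ij}]\in QU_n$ be a Belitskii canonical form under $B_n$-similarity. If $a_{ij}\neq0$, then $i\in I=[n]\setminus S_h$ and one of the following holds: (1) $j=i^+$ (and then $a_{ij}=1$); (2) $j\in S_t\setminus S_h$ and $i^+<j$; (3) $j\notin S_t\cup S_h$ and $j^-<i<i^+<j$. In particular, for each $i\in I$ and each chain of $G_Q$ there is at most one vertex $j$ of that chain with $a_{ij}\neq0$.
   Context: $\mathbb F$ is a field; $[n]=\{1,\dots,n\}$. $B_n$ (resp. $U_n$, $N_n$) is the set of $n\times n$ invertible upper triangular (resp. upper triangular with diagonal entries $1$, strictly upper triangular) matrices over $\mathbb F$; $QU_n=\{QU:U\in U_n\}$; $E_{ij}$ is the matrix unit. A subpermutation is a matrix each of whose rows and columns has at most one nonzero entry, equal to $1$; here $I\subseteq[n]$ and $\sigma:I\to[n]$ is injective with $i<\sigma(i)$. $G_Q$ is the directed graph on $[n]$ with arcs $(i,\sigma(i))$, $i\in I$; its connected components are directed paths $i_1\to\cdots\to i_p$ with $i_1<\cdots<i_p$, called chains. Notation: $i^+:=\sigma(i)$ for $i\in I$, $j^-:=\sigma^{-1}(j)$ for $j\in\sigma(I)$; $S_h=[n]\setminus I$ (chain heads), $S_t=[n]\setminus\sigma(I)$ (chain tails). Belitskii order on positions $\{(i,j):1\le i<j\le n\}$: $(i,j)\prec(i',j')$ iff $i>i'$, or $i=i'$ and $j<j'$. Belitskii's algorithm for $B_n$-similarity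 on $N_n$: given $A\in N_n$ put $A^{(0)}=A$, $G^{(0)}=B_n$. For $k=0,1,\dots$, let $(p,q)$ be the $(k+1)$th position in Belitskii order and look at the $(p,q)$ entries of all matrices $G^{(k)}$-similar to $A^{(k)}$: (a) if this entry is always $0$ or can take every value of $\mathbb F$, choose $A^{(k+1)}$ $G^{(k)}$-similar to $A^{(k)}$ with that entry $0$; (b) if it takes exactly the values of $\mathbb F\setminus\{0\}$, choose $A^{(k+1)}$ with that entry $1$; (c) otherwise it is a constant $\lambda\ne0$ and $A^{(k+1)}=A^{(k)}$. $G^{(k+1)}$ is the subgroup of $g\in G^{(k)}$ such that $gA^{(k+1)}g^{-1}$ agrees with $A^{(k+1)}$ in the first $k+1$ positions. The final matrix is the Belitskii canonical form of $A$; a matrix is a Belitskii canonical form if it is the Belitskii canonical form of some matrix. *)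

(* Defs.v *)
From HB Require Import structures.
From mathcomp Require Import all_boot all_order all_algebra.
Set Implicit Arguments. Unset Strict Implicit. Unset Printing Implicit Defensive.
Import GRing.Theory.
Local Open Scope ring_scope.

Section Belitskii.
Variables (F : fieldType) (n : nat).

Definition upper_trimx (g : 'M[F]_n) : bool :=
  [forall i : 'I_n, forall j : 'I_n, (j < i)%N ==> (g i j == 0)].

Definition Bn (g : 'M[F]_n) : bool := upper_trimx g && (g \in unitmx).

Definition Un (g : 'M[F]_n) : bool :=
  upper_trimx g && [forall i : 'I_n, g i i == 1].

Definition Nn (g : 'M[F]_n) : bool :=
  [forall i : 'I_n, forall j : 'I_n, (j <= i)%N ==> (g i j == 0)].

Definition simmx (g A : 'M[F]_n) : 'M[F]_n := g *m A *m invmx g.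

Definition belitskii_positions : seq ('I_n * 'I_n) :=
  [seq (i, j) | i : 'I_n <- rev (enum 'I_n), j : 'I_n <- filter (fun j0 : 'I_n => (i < j0)%N) (enum 'I_n)].

Definition agree_on (s : seq ('I_n * 'I_n)) (A B : 'M[F]_n) : bool :=
  all (fun pq => A pq.1 pq.2 == B pq.1 pq.2) s.

Fixpoint belitskii_group (As : nat -> 'M[F]_n) (k : nat) (g : 'M[F]_n) : bool :=
  match k with
  | 0 => Bn g
  | k'.+1 => belitskii_group As k' g &&
             agree_on (take k belitskii_positions) (simmx g (As k)) (As k)
  end.

Definition belitskii_step (G : 'M[F]_n -> bool) (pos : 'I_n * 'I_n)
    (A A' : 'M[F]_n) : Prop :=
  let V := fun x : F => exists2 g, G g & simmx g A pos.1 pos.2 = x in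
  let caseA := (forall x, V x <-> x = 0) \/ (forall x, V x) in
  let caseB := forall x, V x <-> x != 0 in
  (caseA -> exists2 g, G g & A' = simmx g A /\ A' pos.1 pos.2 = 0) /\
  (caseB -> exists2 g, G g & A' = simmx g A /\ A' pos.1 pos.2 = 1) /\
  (~ caseA -> ~ caseB -> A' = A).

Definition belitskii_run (M : 'M[F]_n) (As : nat -> 'M[F]_n) : Prop :=
  Nn M /\ As 0%N = M /\
  forall (k : nat) (pos : 'I_n * 'I_n), onth belitskii_positions k = Some pos ->
    belitskii_step (belitskii_group As k) pos (As k) (As k.+1).

Definition belitskii_cf_of (M A : 'M[F]_n) : Prop :=
  exists As, belitskii_run M As /\ A = As (size belitskii_positions).

Definition is_belitskii_cf (A : 'M[F]_n) : Prop := exists M, belitskii_cf_of M A.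

Definition subperm_mx (I : {set 'I_n}) (sigma : 'I_n -> 'I_n) : 'M[F]_n :=
  \matrix_(i, j) (if (i \in I) && (sigma i == j) then 1 else 0).

Definition in_QU (Q A : 'M[F]_n) : Prop := exists2 U, Un U & A = Q *m U.

End Belitskii.

(* undirected adjacency of the graph G_Q: arcs (i, sigma i), i in I *)
Definition GQ_adj (n : nat) (I : {set 'I_n}) (sigma : 'I_n -> 'I_n) : rel 'I_n :=
  fun x y => ((x \in I) && (sigma x == y)) || ((y \in I) && (sigma y == x)).

(* Main.v *)
Require Import Defs.
From HB Require Import structures.
From mathcomp Require Import all_boot all_order all_algebra zify ring.
From Stdlib Require Import Classical.
Set Implicit Arguments. Unset Strict Implicit. Unset Printing Implicit Defensive.
Import GRing.Theory.
Local Open Scope ring_scope.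

Definition upper (F : fieldType) (n : nat) (g : 'M[F]_n) :=
  forall a b : 'I_n, (b < a)%N -> g a b = 0.

Lemma upper_trimxP (F : fieldType) (n : nat) (g : 'M[F]_n) :
  upper_trimx g -> upper g.
Proof. by move=> /forallP H a b ba; have /forallP/(_ b)/implyP/(_ ba)/eqP := H a. Qed.

Lemma upper_trimxI (F : fieldType) (n : nat) (g : 'M[F]_n) :
  upper g -> upper_trimx g.
Proof. by move=> H; apply/forallP=> a; apply/forallP=> b; apply/implyP=> ba; rewrite H. Qed.

Lemma diag_nz (F : fieldType) (n : nat) (g : 'M[F]_n) :
  upper g -> g \in unitmx -> forall a, g a a != 0.
Proof.
move=> Hu; rewrite unitmxE unitfE -det_tr det_trig; last first.
  by apply/is_trig_mxP=> a b ab; rewrite mxE Hu.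
move=> Hp a; apply: contraNneq Hp => Ha.
by rewrite (bigD1 a) //= mxE Ha mul0r.
Qed.

Lemma inv_upper (F : fieldType) (n : nat) (g : 'M[F]_n) :
  upper g -> g \in unitmx -> upper (invmx g).
Proof.
move=> Hu Hg.
have HV := mulVmx Hg.
suff H : forall m (b : 'I_n), (b < m)%N -> forall a : 'I_n, (b < a)%N -> invmx g a b = 0.
  by move=> a b ba; apply: (H b.+1).
elim=> // m IH b bm a ba.
have := congr1 (fun M : 'M[F]_n => M a b) HV.
rewrite !mxE (bigD1 b) //= big1; last first.
  move=> c cb; case: (ltngtP c b) => cb'.
  - by rewrite (IH c) ?mul0r //; lia.
  - by rewrite Hu ?mulr0.
  - by move: cb; rewrite (val_inj cb') eqxx.
rewrite addr0 (negbTE (_ : a != b)); last by apply/eqP=> ab; rewrite ab ltnn in ba.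
move/eqP; rewrite mulf_eq0 (negbTE (diag_nz Hu Hg b)) orbF => /eqP //.
Qed.

Lemma loc0 (F : fieldType) (n : nat) (g h Z : 'M[F]_n) (r s : 'I_n) :
  upper g -> upper h ->
  (forall a b : 'I_n, (r <= a)%N -> (b <= s)%N -> (a != r) || (b != s) -> Z a b = 0) ->
  (g *m Z *m h) r s = g r r * Z r s * h s s.
Proof.
move=> Hg Hh HZ.
rewrite mxE (bigD1 s) //= big1 ?addr0; last first.
  move=> b bs; case: (ltngtP b s) => bs'.
  - rewrite mxE big1 ?mul0r // => a _.
    case: (ltnP a r) => ar; first by rewrite Hg ?mul0r.
    by rewrite HZ ?mulr0 ?(ltnW bs') ?bs ?orbT.
  - by rewrite Hh ?mulr0.
  - by move: bs; rewrite (val_inj bs') eqxx.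
rewrite mxE (bigD1 r) //= big1 ?addr0 // => a ar.
case: (ltnP a r) => ar'; first by rewrite Hg ?mul0r.
by rewrite HZ ?mulr0 ?ar.
Qed.


Definition prec n (p q : 'I_n * 'I_n) : bool :=
  (q.1 < p.1)%N || ((p.1 == q.1 :> nat) && (p.2 < q.2)%N).

Lemma pw_allpairs n (s : seq 'I_n) (t : 'I_n -> seq 'I_n) :
  pairwise (fun a b : 'I_n => (b < a)%N) s -> (forall x, pairwise (fun a b : 'I_n => (a < b)%N) (t x)) ->
  pairwise (@prec n) [seq (x, y) | x <- s, y <- t x].
Proof.
elim: s => //= x s IH /andP[Hx Hs] Ht.
rewrite pairwise_cat IH // andbT; apply/andP; split.
  apply/allrelP=> p q /mapP[y _ ->] /allpairsPdep[x' [y' [Hx' _ ->]]].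
  by rewrite /prec /= (allP Hx x' Hx').
have := Ht x; elim: (t x) => //= y l IHl /andP[Hy Hl].
rewrite IHl // andbT; apply/allP=> q /mapP[z Hz ->].
by rewrite /prec /= eqxx (allP Hy z Hz) orbT.
Qed.

Lemma pairwise_ord n : pairwise (fun a b : 'I_n => (a < b)%N) (enum 'I_n).
Proof.
rewrite -sorted_pairwise; last by move=> a b c; apply: ltn_trans.
by have := iota_ltn_sorted 0 n; rewrite -val_enum_ord sorted_map.
Qed.

Lemma pos_pairwise n : pairwise (@prec n) (belitskii_positions n).
Proof.
apply: pw_allpairs.
  rewrite -sorted_pairwise; last by move=> a b c /= ? ?; apply: ltn_trans; eauto.
  rewrite rev_sorted sorted_pairwise ?pairwise_ord //.
  by move=> a b c; apply: ltn_trans.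
by move=> x; apply: pairwise_filter; apply: pairwise_ord.
Qed.

Lemma pos_mem n (p : 'I_n * 'I_n) : (p \in belitskii_positions n) = (p.1 < p.2)%N.
Proof.
case: p => a b /=; apply/allpairsPdep/idP.
  by case=> x [y [_ Hy [-> ->]]]; move: Hy; rewrite mem_filter => /andP[].
move=> ab; exists a, b; split => //; first by rewrite mem_rev mem_enum.
by rewrite mem_filter ab mem_enum.
Qed.

Lemma prec_irr n (p : 'I_n * 'I_n) : prec p p = false.
Proof. by rewrite /prec !ltnn andbF. Qed.

Lemma prec_asym n (p q : 'I_n * 'I_n) : prec p q -> prec q p -> False.
Proof. rewrite /prec; case: p q => [a b] [c d] /=; lia. Qed.

Lemma pos_uniq n : uniq (belitskii_positions n).
Proof.
have := pos_pairwise n; elim: (belitskii_positions n) => //= x s IH /andP[Hx Hs].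
rewrite IH // andbT; apply/negP=> xs.
by have := allP Hx x xs; rewrite prec_irr.
Qed.

Lemma pos_index n (p q : 'I_n * 'I_n) :
  p \in belitskii_positions n -> q \in belitskii_positions n -> prec p q ->
  (index p (belitskii_positions n) < index q (belitskii_positions n))%N.
Proof.
move=> Hp Hq Hpq; rewrite ltnNge; apply/negP; rewrite leq_eqVlt => /orP[/eqP E|lt].
  by move: Hpq; rewrite -(nth_index p Hp) -E (nth_index p Hq) prec_irr.
have /pairwiseP H := pos_pairwise n.
have := H p (index q (belitskii_positions n)) (index p (belitskii_positions n)).
rewrite !inE !index_mem Hp Hq => /(_ isT isT lt); rewrite !nth_index // => Hqp.
exact: prec_asym Hpq Hqp.
Qed.


Lemma onth_pos n k (p : 'I_n * 'I_n) :
  onth (belitskii_positions n) k = Some p ->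
  [/\ index p (belitskii_positions n) = k, p \in belitskii_positions n &
      (k < size (belitskii_positions n))%N].
Proof.
move=> H; have hk : (k < size (belitskii_positions n))%N by rewrite -onthTE H.
have E := @onth_nth _ p p _ _ H.
by split => //; [rewrite -E index_uniq // pos_uniq | rewrite -E mem_nth].
Qed.

Lemma take_char n m (p : 'I_n * 'I_n) :
  (p \in take m (belitskii_positions n)) =
  (p \in belitskii_positions n) && (index p (belitskii_positions n) < m)%N.
Proof.
case Hp: (p \in belitskii_positions n); first by rewrite in_take.
by apply/negP=> /mem_take; rewrite Hp.
Qed.

Lemma DC n m (r s a b : 'I_n) :
  (r, s) \in take m (belitskii_positions n) -> (r <= a)%N -> (b <= s)%N -> (a < b)%N ->
  (a, b) \in take m (belitskii_positions n).
Proof.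
rewrite !take_char => /andP[Hrs Hi] ra bs ab.
have Hab : (a, b) \in belitskii_positions n by rewrite pos_mem.
rewrite Hab /=; case E: ((a == r) && (b == s)).
  by case/andP: E => /eqP -> /eqP ->.
apply: ltn_trans _ Hi; apply: pos_index => //.
move: E; rewrite /prec /= -!val_eqE /=; lia.
Qed.

Lemma SDC n k (i j a b : 'I_n) :
  index (i, j) (belitskii_positions n) = k -> (i, j) \in belitskii_positions n ->
  (a < b)%N -> (i <= a)%N -> (b <= j)%N -> (a != i) || (b != j) ->
  (a, b) \in take k (belitskii_positions n).
Proof.
move=> Hk Hij ab ia bj H.
have Hab : (a, b) \in belitskii_positions n by rewrite pos_mem.
rewrite take_char Hab -Hk; apply: pos_index => //.
rewrite /prec /=; move: H; rewrite -!val_eqE /=; lia.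
Qed.

Lemma TK n k (i j a b : 'I_n) :
  index (i, j) (belitskii_positions n) = k -> (i, j) \in belitskii_positions n ->
  (a, b) \in take k (belitskii_positions n) ->
  (i < a)%N \/ (a = i /\ (b < j)%N).
Proof.
move=> Hk Hij; rewrite take_char => /andP[Hab]; rewrite -Hk => lt.
have nprec : ~~ prec (i, j) (a, b).
  by apply/negP=> /(pos_index Hij Hab); rewrite ltnNge (ltnW lt).
have ne : (a, b) != (i, j) by apply/eqP=> E; rewrite E ltnn in lt.
move: nprec ne; rewrite /prec /= xpair_eqE -!val_eqE /= => H1 H2.
have [ia|ai] := ltnP i a; first by left.
right; have E : (a : nat) = i by lia.
split; [exact: val_inj | lia].
Qed.

Lemma in_take_succ n k (p : 'I_n * 'I_n) :
  onth (belitskii_positions n) k = Some p -> p \in take k.+1 (belitskii_positions n).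
Proof. by case/onth_pos => Hk Hp _; rewrite take_char Hp Hk ltnSn. Qed.

Lemma take_mono n m m' (p : 'I_n * 'I_n) : (m <= m')%N ->
  p \in take m (belitskii_positions n) -> p \in take m' (belitskii_positions n).
Proof. by move=> mm; rewrite !take_char => /andP[-> H] /=; apply: leq_trans mm. Qed.


Definition lowz (F : fieldType) (n : nat) (X : 'M[F]_n) :=
  forall a b : 'I_n, (b <= a)%N -> X a b = 0.

Lemma NnP (F : fieldType) (n : nat) (X : 'M[F]_n) : Nn X -> lowz X.
Proof. by move=> /forallP H a b ba; have /forallP/(_ b)/implyP/(_ ba)/eqP := H a. Qed.

Lemma NnI (F : fieldType) (n : nat) (X : 'M[F]_n) : lowz X -> Nn X.
Proof. by move=> H; apply/forallP=> a; apply/forallP=> b; apply/implyP=> ba; rewrite H. Qed.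

Lemma agreeP (F : fieldType) (n : nat) (s : seq ('I_n * 'I_n)) (X Y : 'M[F]_n) :
  agree_on s X Y <-> (forall p, p \in s -> X p.1 p.2 = Y p.1 p.2).
Proof. by split => [/allP H p /H /eqP | H]; last (apply/allP => p /H ->). Qed.

Lemma Bn_upper (F : fieldType) (n : nat) (g : 'M[F]_n) :
  Bn g -> [/\ upper g, upper (invmx g) & g \in unitmx].
Proof.
by case/andP=> /upper_trimxP Hu Hg; split => //; apply: inv_upper.
Qed.

Lemma loc_eq (F : fieldType) (n : nat) (g h X Y : 'M[F]_n) (r s : 'I_n) :
  upper g -> upper h ->
  (forall a b : 'I_n, (r <= a)%N -> (b <= s)%N -> X a b = Y a b) ->
  (g *m X *m h) r s = (g *m Y *m h) r s.
Proof.
move=> Hg Hh HXY; apply/eqP; rewrite -subr_eq0.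
have E2 : forall A B : 'M[F]_n, (A - B) r s = A r s - B r s by move=> A0 B0; rewrite !mxE.
have := loc0 (Z := X - Y) Hg Hh (r := r) (s := s).
rewrite mulmxBr mulmxBl E2 => ->; last by move=> a b ra bs _; rewrite !mxE HXY ?subrr.
by rewrite !mxE HXY ?subrr ?mulr0 ?mul0r.
Qed.

Lemma Nn_pres (F : fieldType) (n : nat) (g X : 'M[F]_n) :
  Bn g -> lowz X -> lowz (simmx g X).
Proof.
case/Bn_upper => Hg Hh _ HX r s sr; rewrite /simmx loc0 //.
  by rewrite HX ?mulr0 ?mul0r.
by move=> a b ra bs _; rewrite HX //; apply: leq_trans bs (leq_trans sr ra).
Qed.

Lemma grp_Bn (F : fieldType) (n : nat) (As : nat -> 'M[F]_n) k g :
  belitskii_group As k g -> Bn g.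
Proof. by elim: k => //= k IH /andP[/IH]. Qed.

Lemma step_cases (F : fieldType) (n : nat) (M : 'M[F]_n) As k p :
  belitskii_run M As -> onth (belitskii_positions n) k = Some p ->
  As k.+1 = As k \/ exists2 g, belitskii_group As k g & As k.+1 = simmx g (As k).
Proof.
case=> _ [_ H] /H; rewrite /belitskii_step.
case=> HA [HB HC].
have L : forall (P Y : Prop), (P -> Y) -> (~ P -> Y) -> Y.
  by move=> P Y h1 h2; case: (classic P).
eapply L; first by move=> /HA [g Hg [E _]]; right; exists g.
move=> nA; eapply L; first by move=> /HB [g Hg [E _]]; right; exists g.
by move=> nB; left; apply: HC.
Qed.

Lemma As_low (F : fieldType) (n : nat) (M : 'M[F]_n) As :
  belitskii_run M As -> forall k, (k <= size (belitskii_positions n))%N -> lowz (As k).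
Proof.
move=> Hr; elim=> [_|k IH hk].
  by case: Hr => HM [-> _]; apply: NnP.
have hk' : (k < size (belitskii_positions n))%N by [].
have [p Hp] : exists p, onth (belitskii_positions n) k = Some p.
  by case E: onth => [p|]; [exists p | move: hk'; rewrite -onthTE E].
case: (step_cases Hr Hp) => [->|[g Hg ->]]; first exact: IH (ltnW hk).
by apply: Nn_pres (grp_Bn Hg) (IH (ltnW hk)).
Qed.

Lemma As_agree (F : fieldType) (n : nat) (M : 'M[F]_n) As :
  belitskii_run M As -> forall m, (m <= size (belitskii_positions n))%N ->
  forall p, p \in take m (belitskii_positions n) ->
    As m p.1 p.2 = As (size (belitskii_positions n)) p.1 p.2.
Proof.
move=> Hr m hm.
have [d Hd] : exists d, (size (belitskii_positions n) = m + d)%N by exists (size (belitskii_positions n) - m)%N; lia.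
rewrite Hd; elim: d m hm Hd => [|d IH] m hm Hd p Hp; first by rewrite addn0.
have hk' : (m < size (belitskii_positions n))%N by lia.
have [q Hq] : exists q, onth (belitskii_positions n) m = Some q.
  by case E: onth => [q|]; [exists q | move: hk'; rewrite -onthTE E].
rewrite -addSnnS -IH //; try lia; last by apply: take_mono Hp.
case: (step_cases Hr Hq) => [->|[g Hg ->]] //.
case: m {hm Hd hk' Hq IH} Hg Hp => [|m] /=; first by rewrite take0.
by case/andP=> _ /agreeP H /H ->.
Qed.


Lemma grp_mem (F : fieldType) (n : nat) (M : 'M[F]_n) As (g : 'M[F]_n) :
  belitskii_run M As -> Bn g ->
  forall k, (k <= size (belitskii_positions n))%N ->
  (forall p, p \in take k (belitskii_positions n) ->
     simmx g (As (size (belitskii_positions n))) p.1 p.2 =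
     As (size (belitskii_positions n)) p.1 p.2) ->
  belitskii_group As k g.
Proof.
move=> Hr Hg; set N := size _; set A := As N.
have [Hu Hh _] := Bn_upper Hg.
have lowA : lowz A by apply: (As_low Hr).
elim=> [//|k IH hk H] /=.
rewrite IH ?(ltnW hk) //; last by move=> p Hp; apply: H; apply: take_mono Hp.
apply/agreeP => -[r s] Hp /=.
have lowk : lowz (As k.+1) by apply: (As_low Hr).
have Ek := As_agree Hr hk.
rewrite /simmx (loc_eq (Y := A)) //; last first.
  move=> a b ra bs; case: (ltnP a b) => ab; last by rewrite lowA ?lowk.
  by apply: (Ek (a, b)); apply: DC Hp ra bs ab.
by rewrite (H (r, s)) ?(Ek (r, s)).
Qed.

Lemma core (F : fieldType) (n : nat) (M : 'M[F]_n) As k (i j : 'I_n) :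
  belitskii_run M As -> onth (belitskii_positions n) k = Some (i, j) ->
  (forall x, exists g, [/\ Bn g,
     (forall p, p \in take k (belitskii_positions n) ->
       simmx g (As (size (belitskii_positions n))) p.1 p.2 =
       As (size (belitskii_positions n)) p.1 p.2) &
     simmx g (As k) i j = x]) ->
  As (size (belitskii_positions n)) i j = 0.
Proof.
move=> Hr Hk Hx.
have [_ _ hk] := onth_pos Hk.
have := Hr; case=> _ [_ /(_ k (i, j) Hk)]; rewrite /belitskii_step /=.
case=> HA _.
have [|g _ [_ E]] := HA.
  right=> x; have [g [Hg Hag Hv]] := Hx x.
  by exists g => //; apply: (grp_mem Hr Hg (ltnW hk)).
rewrite -(As_agree Hr hk (in_take_succ Hk)) /=.
exact: E.
Qed.


Definition rk1 (F : fieldType) (n : nat) (u v : 'I_n -> F) : 'M[F]_n :=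
  \matrix_(a, b) (u a * v b).

Definition supp_ok (F : fieldType) (n : nat) (u v : 'I_n -> F) :=
  forall a b : 'I_n, u a != 0 -> v b != 0 -> (a < b)%N.

Lemma supp_uv (F : fieldType) (n : nat) (u v : 'I_n -> F) :
  supp_ok u v -> forall a b : 'I_n, (b <= a)%N -> u a * v b = 0.
Proof.
move=> H a b ba; apply/eqP; rewrite mulf_eq0.
case: (u a =P 0) => //= /eqP ua; apply/negPn/negP => vb.
by have := H a b ua vb; rewrite ltnNge ba.
Qed.

Lemma rk1_sq (F : fieldType) (n : nat) (u v : 'I_n -> F) :
  supp_ok u v -> rk1 u v *m rk1 u v = 0.
Proof.
move=> H; apply/matrixP=> a b; rewrite !mxE big1 // => c _.
rewrite !mxE; have := supp_uv H (leqnn c); move=> E.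
have -> : u a * v c * (u c * v b) = u a * (u c * v c) * v b by ring.
by rewrite E mulr0 mul0r.
Qed.

Lemma rk1_gh (F : fieldType) (n : nat) (u v : 'I_n -> F) :
  supp_ok u v -> (1%:M + rk1 u v) *m (1%:M - rk1 u v) = 1%:M.
Proof.
move=> H; rewrite mulmxDl !mulmxBr !mul1mx mulmx1 rk1_sq //.
by rewrite subr0 subrK.
Qed.

Lemma rk1_inv (F : fieldType) (n : nat) (u v : 'I_n -> F) :
  supp_ok u v -> invmx (1%:M + rk1 u v) = 1%:M - rk1 u v.
Proof.
move=> H; have E := rk1_gh H; have [Hg _] := mulmx1_unit E.
have := congr1 (mulmx (invmx (1%:M + rk1 u v))) E.
by rewrite mulmxA mulVmx // mul1mx mulmx1 => <-.
Qed.

Lemma rk1_upper (F : fieldType) (n : nat) (u v : 'I_n -> F) (s : F) :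
  supp_ok u v -> upper (1%:M + s *: rk1 u v).
Proof.
move=> H a b ba; rewrite !mxE (supp_uv H (ltnW ba)) mulr0 addr0.
by rewrite (negbTE (_ : a != b)) //; apply/eqP=> E; rewrite E ltnn in ba.
Qed.

Lemma rk1_diag (F : fieldType) (n : nat) (u v : 'I_n -> F) (a : 'I_n) :
  supp_ok u v -> rk1 u v a a = 0.
Proof. by move=> H; rewrite mxE (supp_uv H (leqnn a)). Qed.

Lemma rk1_Bn (F : fieldType) (n : nat) (u v : 'I_n -> F) :
  supp_ok u v -> Bn (1%:M + rk1 u v).
Proof.
move=> H; apply/andP; split; last by have [] := mulmx1_unit (rk1_gh H).
by apply: upper_trimxI; have := rk1_upper 1 H; rewrite scale1r.
Qed.

Lemma rk1_sim (F : fieldType) (n : nat) (u v : 'I_n -> F) (X : 'M[F]_n) :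
  supp_ok u v ->
  simmx (1%:M + rk1 u v) X =
  X + rk1 u v *m X - X *m rk1 u v - rk1 u v *m X *m rk1 u v.
Proof.
move=> H; rewrite /simmx rk1_inv // mulmxDl mul1mx !mulmxBr !mulmx1.
by rewrite mulmxDl opprD addrA.
Qed.

Lemma TL (F : fieldType) (n : nat) (M : 'M[F]_n) As k (i j : 'I_n) :
  belitskii_run M As -> onth (belitskii_positions n) k = Some (i, j) ->
  (forall c, exists u v, [/\ supp_ok u v,
     (forall p, p \in take k (belitskii_positions n) ->
       simmx (1%:M + rk1 u v) (As (size (belitskii_positions n))) p.1 p.2 =
       As (size (belitskii_positions n)) p.1 p.2) &
     simmx (1%:M + rk1 u v) (As (size (belitskii_positions n))) i j =
       As (size (belitskii_positions n)) i j + c]) ->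
  As (size (belitskii_positions n)) i j = 0.
Proof.
move=> Hr Hk Hc; apply: (core Hr Hk) => x.
set N := size _; set A := As N; set X := As k.
have [u [v [Hs Hag Hv]]] := Hc (x - X i j).
exists (1%:M + rk1 u v); split => //; first exact: rk1_Bn.
have [Hik Hij hk] := onth_pos Hk.
have Hu : upper (1%:M + rk1 u v) by have := rk1_upper 1 Hs; rewrite scale1r.
have Hh : upper (1%:M - rk1 u v).
  by have := rk1_upper (-1) Hs; rewrite scaleN1r.
have lowA : lowz A by apply: (As_low Hr).
have lowX : lowz X by apply: (As_low Hr); apply: ltnW.
have E2 : forall B C : 'M[F]_n, (B - C) i j = B i j - C i j by move=> B0 C0; rewrite !mxE.
have E3 : (1%:M + rk1 u v) *m (X - A) *m (1%:M - rk1 u v) =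
    simmx (1%:M + rk1 u v) X - simmx (1%:M + rk1 u v) A.
  by rewrite /simmx rk1_inv // (mulmxBr (1%:M + rk1 u v)) mulmxBl.
have := loc0 (Z := X - A) Hu Hh (r := i) (s := j).
rewrite E3 E2 Hv.
have Ed : forall a : 'I_n, (1%:M + rk1 u v) a a = 1 /\ (1%:M - rk1 u v) a a = 1.
  by move=> a; rewrite !mxE eqxx (supp_uv Hs (leqnn a)) mulr1n addr0 subr0.
rewrite (proj1 (Ed i)) (proj2 (Ed j)) mul1r mulr1 E2.
have H' : forall a b : 'I_n, (i <= a)%N -> (b <= j)%N -> (a != i) || (b != j) ->
    (X - A) a b = 0.
  move=> a b ia bj ne; rewrite !mxE.
  case: (ltnP a b) => ab; last by rewrite lowA ?lowX ?subrr.
  by rewrite (As_agree Hr (ltnW hk) (SDC Hik Hij ab ia bj ne)) subrr.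
move=> /(_ H') /eqP; rewrite subr_eq => /eqP ->.
rewrite /A /N; ring.
Qed.


Lemma sim_entry (F : fieldType) (n : nat) (u v : 'I_n -> F) (X : 'M[F]_n) a b :
  supp_ok u v ->
  simmx (1%:M + rk1 u v) X a b =
  X a b + u a * (\sum_c v c * X c b) - (\sum_c X a c * u c) * v b
    - (\sum_c (u a * \sum_d v d * X d c) * u c) * v b.
Proof.
move=> H; rewrite rk1_sim // !mxE.
congr (_ + _ - _ - _).
- by rewrite mulr_sumr; apply: eq_bigr => c _; rewrite mxE mulrA.
- by rewrite mulr_suml; apply: eq_bigr => c _; rewrite mxE mulrA.
- rewrite mulr_suml; apply: eq_bigr => c _; rewrite !mxE mulrA; congr (_ * _ * _).
  by rewrite mulr_sumr; apply: eq_bigr => d _; rewrite mxE mulrA.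
Qed.

Lemma sum_dl (F : fieldType) (n : nat) (f : 'I_n -> F) (q : 'I_n) :
  \sum_c (c == q)%:R * f c = f q.
Proof.
rewrite (bigD1 q) //= eqxx mul1r big1 ?addr0 // => c /negbTE ->; by rewrite mul0r.
Qed.

Lemma sum_dr (F : fieldType) (n : nat) (f : 'I_n -> F) (q : 'I_n) :
  \sum_c f c * (c == q)%:R = f q.
Proof. by rewrite -[RHS](sum_dl f q); apply: eq_bigr => c _; rewrite mulrC. Qed.

Lemma AE (F : fieldType) (n : nat) (I : {set 'I_n}) (sigma : 'I_n -> 'I_n)
   (U : 'M[F]_n) a b :
  (subperm_mx F I sigma *m U) a b = if a \in I then U (sigma a) b else 0.
Proof.
rewrite mxE; case: ifP => aI.
  rewrite (bigD1 (sigma a)) //= !mxE aI eqxx mul1r big1 ?addr0 // => c ca.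
  by rewrite mxE aI /= eq_sym (negbTE ca) mul0r.
by rewrite big1 // => c _; rewrite mxE aI mul0r.
Qed.

Lemma Qmx_E (F : fieldType) (n : nat) (I : {set 'I_n}) (sigma : 'I_n -> 'I_n) a b :
  subperm_mx F I sigma a b = if (a \in I) && (sigma a == b) then 1 else 0.
Proof. by rewrite mxE. Qed.


Lemma sum_dr' (F : fieldType) (n : nat) (f : 'I_n -> F) (q : 'I_n) (x : F) :
  \sum_c f c * ((c == q)%:R * x) = f q * x.
Proof.
rewrite (bigD1 q) //= eqxx mul1r big1 ?addr0 // => c /negbTE ->; by rewrite mul0r mulr0.
Qed.

Lemma caseB (F : fieldType) (n : nat) (I : {set 'I_n}) (sigma : 'I_n -> 'I_n)
  (M U : 'M[F]_n) As k (i j q : 'I_n) :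
  belitskii_run M As -> upper U -> (forall a, U a a = 1) ->
  As (size (belitskii_positions n)) = subperm_mx F I sigma *m U ->
  onth (belitskii_positions n) k = Some (i, j) ->
  q \in I -> sigma q = j -> (i < q)%N ->
  As (size (belitskii_positions n)) i j = 0.
Proof.
move=> Hr HU HU1 HA Hk qI Hq iq.
have lowA : lowz (As (size (belitskii_positions n))) by apply: (As_low Hr).
have [Hik Hij hk] := onth_pos Hk.
have Aqi : As (size (belitskii_positions n)) q i = 0 by apply: lowA; apply: ltnW.
have Aqb : forall b : 'I_n, As (size (belitskii_positions n)) q b = U j b.
  by move=> b; rewrite HA AE qI Hq.
apply: (TL Hr Hk) => c.
exists (fun a => (a == i)%:R * c), (fun b => (b == q)%:R); split.
- move=> a b; case: (a =P i) => [->|]; last by rewrite mul0r eqxx.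
  by case: (b =P q) => [->|] //; rewrite eqxx.
- move=> [a b] Hp /=; rewrite sim_entry; last first.
    move=> a' b'; case: (a' =P i) => [->|]; last by rewrite mul0r eqxx.
    by case: (b' =P q) => [->|] //; rewrite eqxx.
  rewrite sum_dl sum_dr'.
  under eq_bigr => c0 _ do rewrite sum_dl.
  rewrite sum_dr' Aqi Aqb.
  case: (TK Hik Hij Hp) => [ia|[ai bj]].
    have ai : (a == i) = false by apply/negbTE/eqP=> E; rewrite E ltnn in ia.
    by rewrite (lowA a i (ltnW ia)) ai mulr0n ?mul0r ?mulr0 ?mul0r ?addr0 ?subr0.
  by rewrite ai (lowA i i (leqnn _)) (HU j b bj) ?mulr0 ?mul0r ?addr0 ?subr0.
- rewrite sim_entry; last first.
    move=> a' b'; case: (a' =P i) => [->|]; last by rewrite mul0r eqxx.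
    by case: (b' =P q) => [->|] //; rewrite eqxx.
  rewrite sum_dl sum_dr'.
  under eq_bigr => c0 _ do rewrite sum_dl.
  rewrite sum_dr' Aqi Aqb HU1 (lowA i i (leqnn _)).
  have -> : (i == i)%:R = 1 :> F by rewrite eqxx.
  by rewrite ?mulr0 ?mul0r ?subr0 ?mul1r ?mulr1.
Qed.

Lemma Un_unit (F : fieldType) (n : nat) (U : 'M[F]_n) :
  upper U -> (forall a, U a a = 1) -> U \in unitmx.
Proof.
move=> HU HU1; rewrite unitmxE -det_tr det_trig.
  by rewrite big1 ?unitr1 // => a _; rewrite mxE HU1.
by apply/is_trig_mxP=> a b ab; rewrite mxE HU.
Qed.

Lemma caseA (F : fieldType) (n : nat) (I : {set 'I_n}) (sigma : 'I_n -> 'I_n)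
  (M U : 'M[F]_n) As k (i j : 'I_n) :
  {in I &, injective sigma} ->
  belitskii_run M As -> upper U -> (forall a, U a a = 1) ->
  As (size (belitskii_positions n)) = subperm_mx F I sigma *m U ->
  onth (belitskii_positions n) k = Some (i, j) ->
  i \in I -> j \notin I -> (sigma i < j)%N ->
  As (size (belitskii_positions n)) i j = 0.
Proof.
move=> sinj Hr HU HU1 HA Hk iI jI sij.
have [Hik Hij hk] := onth_pos Hk.
have Uu := Un_unit HU HU1.
have HV := inv_upper HU Uu.
have Ajb : forall b : 'I_n, As (size (belitskii_positions n)) j b = 0.
  by move=> b; rewrite HA AE (negbTE jI).
have AV : forall a : 'I_n, \sum_c As (size (belitskii_positions n)) a c * invmx U c (sigma i)
    = (a == i)%:R.
  move=> a; have := congr1 (fun X : 'M[F]_n => X a (sigma i)) (mulmxK Uu (subperm_mx F I sigma)).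
  rewrite -HA mxE => ->; rewrite mxE.
  case: (a =P i) => [->|ai]; first by rewrite iI eqxx.
  case aI: (a \in I) => //=; case: (sigma a =P sigma i) => // E.
  by case: ai; apply: sinj.
have Hs : forall c : F, supp_ok (fun a => invmx U a (sigma i) * c) (fun b => (b == j)%:R).
  move=> c a b /=; case: (ltnP (sigma i) a) => ia; first by rewrite HV // mul0r eqxx.
  case: (b =P j) => [->|] //= _ _; last by rewrite eqxx.
  exact: leq_ltn_trans ia sij.
apply: (TL Hr Hk) => c.
exists (fun a => invmx U a (sigma i) * (- c)), (fun b => (b == j)%:R); split => //.
- move=> [a b] Hp /=; rewrite sim_entry // sum_dl Ajb.
  under eq_bigr => c0 _ do rewrite mulrA.
  rewrite -mulr_suml AV.
  under eq_bigr => c0 _ do rewrite sum_dl Ajb mulr0 mul0r.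
  rewrite big1 // mul0r.
  case: (TK Hik Hij Hp) => [ia|[ai bj]].
    have ai : (a == i) = false by apply/negbTE/eqP=> E; rewrite E ltnn in ia.
    by rewrite ai ?mulr0n ?mul0r ?mulr0 ?addr0 ?subr0.
  have bj' : (b == j) = false by apply/negbTE/eqP=> E; rewrite E ltnn in bj.
  by rewrite bj' ?mulr0n ?mul0r ?mulr0 ?addr0 ?subr0.
- rewrite sim_entry // sum_dl Ajb.
  under eq_bigr => c0 _ do rewrite mulrA.
  rewrite -mulr_suml AV.
  under eq_bigr => c0 _ do rewrite sum_dl Ajb mulr0 mul0r.
  rewrite big1 // mul0r.
  have -> : (i == i)%:R = 1 :> F by rewrite eqxx.
  have -> : (j == j)%:R = 1 :> F by rewrite eqxx.
  by rewrite ?mulr0 ?addr0 ?subr0 ?mul1r ?mulr1 ?opprK.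
Qed.


Inductive fwd (n : nat) (I : {set 'I_n}) (sigma : 'I_n -> 'I_n) : 'I_n -> 'I_n -> Prop :=
| fwd0 x : fwd I sigma x x
| fwdS x y : x \in I -> fwd I sigma (sigma x) y -> fwd I sigma x y.

Lemma fwd_le n (I : {set 'I_n}) (sigma : 'I_n -> 'I_n) (x y : 'I_n) :
  (forall i, i \in I -> (i < sigma i)%N) -> fwd I sigma x y -> (x <= y)%N.
Proof.
move=> Hi; elim=> // a b aI _ IH; apply: leq_trans IH; apply: ltnW; exact: Hi.
Qed.

Lemma fwd_last n (I : {set 'I_n}) (sigma : 'I_n -> 'I_n) (x y : 'I_n) :
  fwd I sigma x y -> x <> y -> exists w, [/\ w \in I, sigma w = y & fwd I sigma x w].
Proof.
elim=> // a b aI H IH ne.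
case: (eqVneq (sigma a) b) => [E|ne'].
  by exists a; split => //; apply: fwd0.
have [w [wI Hw Hf]] := IH (fun E => negP ne' (introT eqP E)).
by exists w; split => //; apply: fwdS.
Qed.

Lemma fwd_snoc n (I : {set 'I_n}) (sigma : 'I_n -> 'I_n) (x w : 'I_n) :
  fwd I sigma x w -> w \in I -> fwd I sigma x (sigma w).
Proof.
elim=> [a aI|a b aI _ IH bI]; first by apply: fwdS => //; apply: fwd0.
by apply: fwdS => //; apply: IH.
Qed.

Lemma fwd_inv n (I : {set 'I_n}) (sigma : 'I_n -> 'I_n) (x y : 'I_n) :
  fwd I sigma x y -> x = y \/ fwd I sigma (sigma x) y.
Proof. by case=> [a|a b _ H]; [left | right]. Qed.

Lemma conn_fwd n (I : {set 'I_n}) (sigma : 'I_n -> 'I_n) (x y : 'I_n) :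
  {in I &, injective sigma} ->
  connect (GQ_adj I sigma) x y -> fwd I sigma x y \/ fwd I sigma y x.
Proof.
move=> sinj /connectP [p Hp ->] {y}.
elim: p x Hp => [|z p IH] x /=; first by left; apply: fwd0.
case/andP => Hxz /IH {IH}; set L := last z p.
case/orP: Hxz => /andP[xI /eqP Hx] [Hf|Hf].
- by left; apply: fwdS => //; rewrite Hx.
- case: (eqVneq z L) => [E|ne].
    by left; rewrite -E -Hx; apply: fwdS => //; apply: fwd0.
  have [w [wI Hw Hf']] := fwd_last Hf (fun E => negP ne (introT eqP (esym E))).
  by right; have <- : w = x by apply: sinj => //; rewrite Hw Hx.
- case: (fwd_inv Hf) => [E|Hf'].
    by right; rewrite -E; apply: fwdS => //; rewrite Hx; apply: fwd0.
  by left; rewrite -Hx.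
- by right; rewrite -Hx; apply: fwd_snoc.
Qed.


Lemma onth_index n (p : 'I_n * 'I_n) :
  p \in belitskii_positions n ->
  onth (belitskii_positions n) (index p (belitskii_positions n)) = Some p.
Proof. by move=> Hp; rewrite onthE (nth_map p) ?index_mem // nth_index. Qed.

Unset Implicit Arguments.
Set Strict Implicit.

Theorem theorem4p8 (F : fieldType) (n : nat) (I : {set 'I_n})
    (sigma : 'I_n -> 'I_n)
    (sigma_inj : {in I &, injective sigma})
    (sigma_incr : forall i, i \in I -> (i < sigma i)%N)
    (A : 'M[F]_n)
    (HQU : in_QU (subperm_mx F I sigma) A)
    (Hcf : is_belitskii_cf A) :
  let Sh := ~: I in
  let St := ~: (sigma @: I) in
  (forall i j : 'I_n, A i j != 0 ->
     i \in I /\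
     [\/ j = sigma i /\ A i j = 1,
         j \in St :\: Sh /\ (sigma i < j)%N
       | j \notin St :|: Sh /\
         (exists2 jm, (jm \in I) && (sigma jm == j) & (jm < i)%N) /\
         (i < sigma i)%N /\ (sigma i < j)%N]) /\
  (forall i : 'I_n, i \in I -> forall j1 j2 : 'I_n,
     connect (GQ_adj I sigma) j1 j2 -> A i j1 != 0 -> A i j2 != 0 -> j1 = j2).
Proof.
move=> Sh St; rewrite {}/Sh {}/St.
case: HQU => U HUn HA.
case: Hcf => M [As [Hr HAN]].
case/andP: HUn => /upper_trimxP HU /forallP HU1'.
have HU1 : forall a, U a a = 1 by move=> a; apply/eqP; apply: HU1'.
have HAs : As (size (belitskii_positions n)) = subperm_mx F I sigma *m U by rewrite -HAN.
have Aent : forall a b, A a b = if a \in I then U (sigma a) b else 0.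
  by move=> a b; rewrite HA AE.
have Anz : forall i j, A i j != 0 -> [/\ i \in I, A i j = U (sigma i) j & (sigma i <= j)%N].
  move=> i j; rewrite Aent; case: ifP => [iI Hij|]; last by rewrite eqxx.
  split => //; rewrite leqNgt; apply/negP => ji.
  by move: Hij; rewrite HU ?eqxx.
have P1 : forall i j : 'I_n, A i j != 0 ->
     i \in I /\
     [\/ j = sigma i /\ A i j = 1,
         j \in ~: (sigma @: I) :\: ~: I /\ (sigma i < j)%N
       | j \notin ~: (sigma @: I) :|: ~: I /\
         (exists2 jm, (jm \in I) && (sigma jm == j) & (jm < i)%N) /\
         (i < sigma i)%N /\ (sigma i < j)%N].
  move=> i j Hij; have [iI AU sj] := Anz i j Hij.
  split => //.
  case: (eqVneq j (sigma i)) => [E|ne].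
    by constructor 1; split => //; rewrite AU E HU1.
  have sij : (sigma i < j)%N by rewrite ltn_neqAle sj andbT eq_sym val_eqE.
  have Hp : (i, j) \in belitskii_positions n.
    by rewrite pos_mem /=; apply: ltn_trans sij; apply: sigma_incr.
  have Hk := @onth_index _ _ Hp.
  have jI : j \in I.
    case jI: (j \in I) => //.
    move: Hij; rewrite HAN (caseA sigma_inj Hr HU HU1 HAs Hk iI) ?jI ?eqxx //.
  case: (boolP (j \in sigma @: I)) => [/imsetP [jm jmI Ej]|nj].
    have ne' : jm != i by apply/eqP=> E; move: ne; rewrite Ej E eqxx.
    case: (ltngtP i jm) => [ijm|jmi|E]; last by move: ne'; rewrite (val_inj E) eqxx.
      move: Hij; rewrite HAN (caseB Hr HU HU1 HAs Hk jmI (esym Ej) ijm) eqxx //.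
    constructor 3; split.
      by rewrite in_setU !in_setC negb_or negbK /= jI andbT; apply/imsetP; exists jm.
    split; first by exists jm => //; rewrite jmI Ej eqxx.
    by split => //; apply: sigma_incr.
  constructor 2; split => //.
  by rewrite in_setD !in_setC jI nj.
split => //.
move=> i iI.
have H2 : forall x y, fwd I sigma x y -> x <> y -> A i x != 0 -> A i y != 0 -> False.
  move=> x y Hf ne Hx Hy.
  have [_ _ sx] := Anz i x Hx.
  have [w [wI Hw Hfw]] := fwd_last Hf ne.
  have xw := fwd_le sigma_incr Hfw.
  have iw : (i < w)%N.
    by apply: leq_trans xw; apply: leq_trans sx; apply: sigma_incr.
  have [_ [[Ey _]|[Hy' _]|[_ [[jm /andP [jmI /eqP Ejm] jmi] _]]]] := P1 i y Hy.
  - have E : w = i by apply: sigma_inj => //; rewrite Hw.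
    by rewrite E ltnn in iw.
  - move: Hy'; rewrite in_setD in_setC => /andP[_ /negP]; apply.
    by rewrite -Hw; apply: imset_f.
  - have E : w = jm by apply: sigma_inj => //; rewrite Hw.
    by move: iw; rewrite E => iw; move: (ltn_trans iw jmi); rewrite ltnn.
move=> j1 j2 Hc H1 H2'.
case: (eqVneq j1 j2) => [//|ne]; exfalso.
have ne' : j1 <> j2 by apply/eqP.
case: (conn_fwd sigma_inj Hc) => Hf.
  exact: H2 Hf ne' H1 H2'.
by apply: H2 Hf (fun E => ne' (esym E)) H2' H1.
Qed.
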